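(* Let $\mathbf C$ be a symmetric monoidal restriction category. The tensor unit $I$ of $\mathrm{Aux}(\mathbf C)$ is restriction terminal: for every object $A$, the morphism $!_A=[\lambda_A^{-1},A]\colon A\to I$ is total, and every total morphism $[f,E]\colon A\to I$ of $\mathrm{Aux}(\mathbf C)$ equals $!_A$. Consequently $\mathrm{Aux}(\mathbf C)$ is affine, and the projections $\pi_1=\rho_A\circ(\mathrm{id}_A\otimes !_B)\colon A\otimes B\to A$ and $\pi_2=\lambda_B\circ(!_A\otimes\mathrm{id}_B)\colon A\otimes B\to B$ (formed in $\mathrm{Aux}(\mathbf C)$) are total.
   Context: A restriction category is a category equipped with an assignment to each morphism $f\colon A\to B$ of an endomorphism $\overline{f}\colon A\to A$ such that (i) $f\circ\overline f=f$; (ii) $\overline f\circ\overline g=\overline g\circ\overline f$ whenever $f,g$ have a common domain; (iii) $\overline{g\circ\overline f}=\overline g\circ\overline f$ whenever $f,g$ have a common domain; (iv) $\overline g\circ f=f\circ\overline{g\circ f}$ whenever $g\circ f$ is defined. A morphism $f$ is total if $\overline f=\mathrm{id}$. A (symmetric) monoidal restriction category is a restriction category with a (symmetric) monoidal structure such that $\overline{f\otimes g}=\overline f\otimes\overline g$. An object $1$ is restriction terminal if every object has exactly one total morphism to $1$; a symmetric monoidal restriction category is affine if its tensor unit is restriction terminal. Let $\mathbf C$ be a symmetric monoidal restriction category with tensor unit $I$, associator $\alpha$, left unitor $\lambda$, right unitor $\rho$. For morphisms $f\colon A\to B\otimes E$ and $f'\colon A\to B\otimes E'$ write $f\triangleright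 f'$ if $\overline f=\overline{f'}$ and there is a morphism $h\colon E\to E'$ with $(\mathrm{id}_B\otimes h)\circ f=f'$. Let $\sim$ be the equivalence relation generated by $\triangleright$. The category $\mathrm{Aux}(\mathbf C)$ has the objects of $\mathbf C$; a morphism $A\to B$ is a $\sim$-class $[f,E]$ of a morphism $f\colon A\to B\otimes E$ of $\mathbf C$; composition is $[g,E']\circ[f,E]=[\alpha\circ(g\otimes\mathrm{id}_E)\circ f,\;E'\otimes E]$; identities are $[\rho^{-1},I]$. It is a symmetric monoidal restriction category with $\overline{[f,E]}=[\rho^{-1}\circ\overline f,I]$, tensor on objects as in $\mathbf C$, $[f,E]\otimes[f',E']=[\vartheta\circ(f\otimes f'),E\otimes E']$ where $\vartheta\colon(B\otimes E)\otimes(B'\otimes E')\cong(B\otimes B')\otimes(E\otimes E')$ is the canonical isomorphism, and coherence isomorphisms $[\rho^{-1}\circ\beta,I]$ for coherence isomorphisms $\beta$ of $\mathbf C$ (unitors of $\mathrm{Aux}(\mathbf C)$ are again written $\lambda,\rho$). *)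

(* Defs.v *)
From Stdlib Require Import Relations.Relation_Operators.

Set Implicit Arguments.
Unset Strict Implicit.

Record SMRC := {
  ob : Type;
  hom : ob -> ob -> Type;
  idm : forall A, hom A A;
  comp : forall A B C, hom B C -> hom A B -> hom A C;
  comp_id_l : forall A B (f : hom A B), comp (idm B) f = f;
  comp_id_r : forall A B (f : hom A B), comp f (idm A) = f;
  comp_assoc : forall A B C D (h : hom C D) (g : hom B C) (f : hom A B),
      comp h (comp g f) = comp (comp h g) f;
  restr : forall A B, hom A B -> hom A A;
  R1 : forall A B (f : hom A B), comp f (restr f) = f;
  R2 : forall A B C (f : hom A B) (g : hom A C),
      comp (restr f) (restr g) = comp (restr g) (restr f);
  R3 : forall A B C (f : hom A B) (g : hom A C),
      restr (comp g (restr f)) = comp (restr g) (restr f);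
  R4 : forall A B C (f : hom A B) (g : hom B C),
      comp (restr g) f = comp f (restr (comp g f));
  tens : ob -> ob -> ob;
  tensm : forall A B A' B', hom A B -> hom A' B' -> hom (tens A A') (tens B B');
  tensm_id : forall A A', tensm (idm A) (idm A') = idm (tens A A');
  tensm_comp : forall A B C A' B' C' (g : hom B C) (f : hom A B)
      (g' : hom B' C') (f' : hom A' B'),
      comp (tensm g g') (tensm f f') = tensm (comp g f) (comp g' f');
  unit : ob;
  alpha : forall A B C, hom (tens (tens A B) C) (tens A (tens B C));
  alpha_inv : forall A B C, hom (tens A (tens B C)) (tens (tens A B) C);
  lam : forall A, hom (tens unit A) A;
  lam_inv : forall A, hom A (tens unit A);
  rho : forall A, hom (tens A unit) A;
  rho_inv : forall A, hom A (tens A unit);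
  sigma : forall A B, hom (tens A B) (tens B A);
  alpha_iso1 : forall A B C, comp (alpha A B C) (alpha_inv A B C) = idm _;
  alpha_iso2 : forall A B C, comp (alpha_inv A B C) (alpha A B C) = idm _;
  lam_iso1 : forall A, comp (lam A) (lam_inv A) = idm _;
  lam_iso2 : forall A, comp (lam_inv A) (lam A) = idm _;
  rho_iso1 : forall A, comp (rho A) (rho_inv A) = idm _;
  rho_iso2 : forall A, comp (rho_inv A) (rho A) = idm _;
  alpha_nat : forall A B C A' B' C' (f : hom A A') (g : hom B B') (h : hom C C'),
      comp (alpha A' B' C') (tensm (tensm f g) h)
      = comp (tensm f (tensm g h)) (alpha A B C);
  lam_nat : forall A B (f : hom A B),
      comp (lam B) (tensm (idm unit) f) = comp f (lam A);
  rho_nat : forall A B (f : hom A B),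
      comp (rho B) (tensm f (idm unit)) = comp f (rho A);
  sigma_nat : forall A B A' B' (f : hom A A') (g : hom B B'),
      comp (sigma A' B') (tensm f g) = comp (tensm g f) (sigma A B);
  triangle : forall A B,
      comp (tensm (idm A) (lam B)) (alpha A unit B) = tensm (rho A) (idm B);
  pentagon : forall A B C D,
      comp (tensm (idm A) (alpha B C D))
        (comp (alpha A (tens B C) D) (tensm (alpha A B C) (idm D)))
      = comp (alpha A B (tens C D)) (alpha (tens A B) C D);
  hexagon : forall A B C,
      comp (alpha B C A) (comp (sigma A (tens B C)) (alpha A B C))
      = comp (tensm (idm B) (sigma A C))
          (comp (alpha B A C) (tensm (sigma A B) (idm C)));
  sigma_sym : forall A B, comp (sigma B A) (sigma A B) = idm (tens A B);
  restr_tensm : forall A B A' B' (f : hom A B) (g : hom A' B'),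
      restr (tensm f g) = tensm (restr f) (restr g)
}.

Arguments hom {s} _ _.
Arguments idm {s} A.
Arguments comp {s A B C} g f.
Arguments restr {s A B} f.
Arguments tens {s} _ _.
Arguments tensm {s A B A' B'} f g.
Arguments unit {s}.
Arguments alpha {s} A B C.
Arguments alpha_inv {s} A B C.
Arguments lam {s} A.
Arguments lam_inv {s} A.
Arguments rho {s} A.
Arguments rho_inv {s} A.
Arguments sigma {s} A B.

Section Aux.
Variable C : SMRC.

(** A representative (f, E) of a morphism A -> B of Aux(C): f : A -> B (x) E. *)
Record auxm (A B : ob C) := AuxM { aux_E : ob C; aux_f : hom A (tens B aux_E) }.
Arguments AuxM {A B} aux_E aux_f.

Definition aux_tri A B (p q : auxm A B) : Prop :=
  restr (aux_f p) = restr (aux_f q) /\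
  exists h : hom (aux_E p) (aux_E q), comp (tensm (idm B) h) (aux_f p) = aux_f q.

(** ~ : equivalence relation generated by |>; equality of morphisms of Aux(C). *)
Definition aux_eq A B : auxm A B -> auxm A B -> Prop :=
  clos_refl_sym_trans (auxm A B) (@aux_tri A B).

Definition aux_id (A : ob C) : auxm A A := AuxM unit (rho_inv A).

Definition aux_comp A B D (g : auxm B D) (f : auxm A B) : auxm A D :=
  AuxM (tens (aux_E g) (aux_E f))
       (comp (alpha D (aux_E g) (aux_E f)) (comp (tensm (aux_f g) (idm (aux_E f))) (aux_f f))).

Definition aux_restr A B (f : auxm A B) : auxm A A :=
  AuxM unit (comp (rho_inv A) (restr (aux_f f))).

Definition theta (B E B' E' : ob C) :
  hom (tens (tens B E) (tens B' E')) (tens (tens B B') (tens E E')) :=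
  comp (alpha_inv B B' (tens E E'))
  (comp (tensm (idm B) (alpha B' E E'))
  (comp (tensm (idm B) (tensm (sigma E B') (idm E')))
  (comp (tensm (idm B) (alpha_inv E B' E'))
        (alpha B E (tens B' E'))))).

Definition aux_tensor A B A' B' (f : auxm A B) (f' : auxm A' B') :
  auxm (tens A A') (tens B B') :=
  AuxM (tens (aux_E f) (aux_E f'))
       (comp (theta B (aux_E f) B' (aux_E f')) (tensm (aux_f f) (aux_f f'))).

Definition aux_coh A B (beta : hom A B) : auxm A B :=
  AuxM unit (comp (rho_inv B) beta).

Definition aux_lam (B : ob C) : auxm (tens unit B) B := aux_coh (lam B).
Definition aux_rho (A : ob C) : auxm (tens A unit) A := aux_coh (rho A).

Definition aux_total A B (f : auxm A B) : Prop := aux_eq (aux_restr f) (aux_id A).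

Definition aux_bang (A : ob C) : auxm A unit := AuxM A (lam_inv A).

Definition aux_restriction_terminal (X : ob C) : Prop :=
  forall A : ob C, exists t : auxm A X,
    aux_total t /\ forall t' : auxm A X, aux_total t' -> aux_eq t' t.

Definition aux_affine : Prop := aux_restriction_terminal unit.

Definition aux_pi1 (A B : ob C) : auxm (tens A B) A :=
  aux_comp (aux_rho A) (aux_tensor (aux_id A) (aux_bang B)).
Definition aux_pi2 (A B : ob C) : auxm (tens A B) B :=
  aux_comp (aux_lam B) (aux_tensor (aux_bang A) (aux_id B)).

End Aux.

(* Main.v *)
Require Import Defs.
From Stdlib Require Import Relations.Relation_Operators.

Section S.
Variable C : SMRC.

Definition tot {A B : ob C} (f : hom A B) := restr f = idm A.

Lemma restr_id (A : ob C) : tot (idm A).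
Proof. unfold tot. rewrite <- (comp_id_l (restr (idm A))). apply R1. Qed.

Lemma tot_sec {A B : ob C} {f : hom A B} {g : hom B A} : comp g f = idm A -> tot f.
Proof.
  intro H. unfold tot.
  assert (E : restr (comp g f) = comp (restr (comp g f)) (restr f)).
  { rewrite <- R3. rewrite <- comp_assoc, R1. reflexivity. }
  rewrite H, (restr_id A), comp_id_l in E. symmetry; exact E.
Qed.

Lemma tot_comp A B D (f : hom A B) (g : hom B D) : tot f -> tot g -> tot (comp g f).
Proof.
  unfold tot; intros Hf Hg.
  pose proof (R4 f g) as E. rewrite Hg, comp_id_l in E.
  assert (E2 : restr f = restr (comp f (restr (comp g f)))) by (rewrite <- E; reflexivity).
  rewrite R3, Hf, comp_id_l in E2. symmetry; exact E2.
Qed.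

Lemma tot_tens A B A' B' (f : hom A B) (g : hom A' B') : tot f -> tot g -> tot (tensm f g).
Proof. unfold tot; intros Hf Hg. rewrite restr_tensm, Hf, Hg. apply tensm_id. Qed.

Lemma aux_eq_restr (A B : ob C) (p q : auxm A B) : aux_eq p q -> restr (aux_f p) = restr (aux_f q).
Proof.
  induction 1 as [x y [H _] | x | x y _ IH | x y z _ IH1 _ IH2]; auto.
  congruence.
Qed.

Lemma total_iff (A B : ob C) (t : auxm A B) : aux_total t <-> tot (aux_f t).
Proof.
  split.
  - intro H. apply aux_eq_restr in H. simpl in H.
    rewrite R3 in H.
    assert (Hr : tot (rho_inv A)) by (apply (tot_sec (@rho_iso1 C A))).
    unfold tot in *. rewrite Hr, comp_id_l in H. exact H.
  - intro H. unfold aux_total, aux_restr. unfold tot in H. rewrite H, comp_id_r.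
    apply rst_refl.
Qed.

End S.
Arguments tot_sec {C A B f g} _.

Ltac tott :=
  repeat first
    [ apply tot_comp
    | apply tot_tens
    | apply restr_id
    | apply (tot_sec (alpha_iso2 _ _ _))
    | apply (tot_sec (alpha_iso1 _ _ _))
    | apply (tot_sec (rho_iso2 _))
    | apply (tot_sec (rho_iso1 _))
    | apply (tot_sec (lam_iso1 _))
    | apply (tot_sec (lam_iso2 _))
    | apply (tot_sec (sigma_sym _ _)) ].

Theorem mainTheorem5 (C : SMRC) :
  (forall A : ob C, aux_total (aux_bang A)) /\
  (forall (A : ob C) (t : auxm A unit), aux_total t -> aux_eq t (aux_bang A)) /\
  aux_affine C /\
  (forall A B : ob C, aux_total (aux_pi1 A B) /\ aux_total (aux_pi2 A B)).
Proof.
  assert (H1 : forall A : ob C, aux_total (aux_bang A)).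
  { intro A. apply total_iff. simpl. tott. }
  assert (H2 : forall (A : ob C) (t : auxm A unit), aux_total t -> aux_eq t (aux_bang A)).
  { intros A [E f] Ht. apply total_iff in Ht. simpl in Ht.
    apply rst_sym, rst_step. split.
    - simpl. pose proof (H1 A) as Hb. apply total_iff in Hb. simpl in Hb.
      unfold tot in *. congruence.
    - simpl. exists (comp (lam E) f).
      assert (N : tensm (idm unit) (comp (lam E) f)
                  = comp (lam_inv E) (comp (comp (lam E) f) (lam A))).
      { rewrite <- lam_nat, comp_assoc, lam_iso2, comp_id_l. reflexivity. }
      rewrite N, <- !comp_assoc, lam_iso1, comp_id_r, comp_assoc, lam_iso2, comp_id_l.
      reflexivity. }
  split; [exact H1|]. split; [exact H2|]. split.
  - intro A. exists (aux_bang A). split; auto.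
  - intros A B. split; apply total_iff; simpl; unfold theta, aux_coh; simpl; tott.
Qed.
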